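(* Let $\{\psi_j\}_{j\ge1}$ be the Fourier basis of $L^2([0,1])$: $\psi_1\equiv1$, $\psi_{2j}(t)=\sqrt2\cos(2\pi jt)$, $\psi_{2j+1}(t)=\sqrt2\sin(2\pi jt)$ for $j\in\mathbb N$. For $j,k\in\mathbb N$ let $\Lambda_{j,k}=\log(2(j\vee k))$. There exists a constant $c_{L,W}>0$, independent of $j$ and $k$, such that for all $j,k\in\mathbb N$ and all $\epsilon\in(0,1/2)$ there exists a deep ReLU network $\widetilde\Psi_{jk}:[0,1]^2\to\mathbb R$ of depth $L\le c_{L,W}\Lambda_{j,k}\log^2(1/\epsilon)$ and width $W\le c_{L,W}\Lambda_{j,k}\log^3(1/\epsilon)$ satisfying \[ \sup_{(s,t)\in[0,1]^2}\big|\psi_j(s)\psi_k(t)-\widetilde\Psi_{jk}(s,t)\big|\le\epsilon . \]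
   Context: A deep ReLU network of depth $L$ and width $W$ is a map of the form $x\mapsto A_L\sigma_{b_L}A_{L-1}\cdots A_1\sigma_{b_1}A_0x$ with matrices $A_l$ having at most $W$ rows/columns in hidden layers, bias vectors $b_l$, and $\sigma_b(y)=(\max\{y_i-b_i,0\})_i$. *)

(* Defs.v *)
From HB Require Import structures.
From mathcomp Require Import all_boot all_order all_algebra.
From mathcomp Require Import all_classical all_reals.
From mathcomp Require Import exp trigo.
Set Implicit Arguments. Unset Strict Implicit. Unset Printing Implicit Defensive.
Import Order.TTheory GRing.Theory Num.Theory.
Local Open Scope ring_scope.

(* A deep ReLU network with input dimension n and output dimension 1:
   x |-> A_L sigma_{b_L} A_{L-1} ... A_1 sigma_{b_1} A_0 x.
   [RNlayer A b N] first applies the affine-free map x |-> A x (A : m x n),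
   then the shifted ReLU sigma_b(y) = (max(y_i - b_i, 0))_i, then the
   network N (on input dimension m).  [RNout A] is the final linear map A_L. *)
Inductive relu_net (R : Type) : nat -> Type :=
| RNout n of 'M[R]_(1, n) : relu_net R n
| RNlayer n m of 'M[R]_(m, n) & 'cV[R]_m & relu_net R m : relu_net R n.

Definition sigma_b (R : realType) m (b y : 'cV[R]_m) : 'cV[R]_m :=
  \col_i Num.max (y i 0 - b i 0) 0.

Fixpoint net_eval (R : realType) n (N : relu_net R n) : 'cV[R]_n -> R :=
  match N in relu_net _ n return 'cV[R]_n -> R with
  | RNout _ A => fun x => (A *m x) 0 0
  | RNlayer _ m A b N' => fun x => net_eval N' (sigma_b b (A *m x))
  end.

Fixpoint net_depth (R : Type) n (N : relu_net R n) : nat :=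
  match N with
  | RNout _ _ => 0%N
  | RNlayer _ _ _ _ N' => (net_depth N').+1
  end.

Fixpoint net_width (R : Type) n (N : relu_net R n) : nat :=
  match N with
  | RNout _ _ => 0%N
  | RNlayer _ m _ _ N' => maxn m (net_width N')
  end.

Definition pt2 (R : realType) (s t : R) : 'cV[R]_2 :=
  \col_(i < 2) (if i == ord0 then s else t).

Definition fourier_psi (R : realType) (j : nat) (t : R) : R :=
  if j == 1%N then 1
  else if odd j then Num.sqrt 2 * sin (2 * pi * (j./2)%:R * t)
  else Num.sqrt 2 * cos (2 * pi * (j./2)%:R * t).

Definition Lambda (R : realType) (j k : nat) : R := ln ((2 * maxn j k)%:R).

(* Main.v *)
Require Import Defs.
From HB Require Import structures.
From mathcomp Require Import all_boot all_order all_algebra.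
From mathcomp Require Import all_classical all_reals.
From mathcomp Require Import exp trigo.
From mathcomp Require Import topology normedtype derive realfun.
From mathcomp Require Import ring lra zify.
Set Implicit Arguments. Unset Strict Implicit. Unset Printing Implicit Defensive.
Import Order.TTheory GRing.Theory Num.Theory.
Import numFieldNormedType.Exports.
Local Open Scope ring_scope.


Lemma mono0 {R : realType} (f : R -> R) (df : R -> R) :
  (forall y, is_derive y (1:R) f (df y)) -> (forall y, 0 <= y -> 0 <= df y) ->
  forall x, 0 <= x -> f 0 <= f x.
Proof.
move=> H Hd x x0.
apply: (@ger0_derive1_ndecry R f 0 _ _ _ 0 x (lexx _) x0).
- by move=> y _; have HH := H y; exact: (@ex_derive _ _ _ _ _ _ _ HH).
- move=> y; rewrite in_itv /= andbT => /ltW y0.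
  have HH := H y; rewrite derive1E (@derive_val _ _ _ _ _ _ _ HH); exact: Hd.
- apply: continuous_subspaceT => y.
  have HH := H y.
  apply/differentiable_continuous/derivable1_diffP; exact: (@ex_derive _ _ _ _ _ _ _ HH).
Qed.

Lemma sin_le_id {R : realType} (x : R) : 0 <= x -> sin x <= x.
Proof.
move=> x0.
have H1 : forall y, is_derive y (1:R) (fun z => z - sin z) (1 - cos y).
  by move=> y; apply: is_deriveB.
have H2 : forall y : R, 0 <= y -> 0 <= 1 - cos y.
  by move=> y _; rewrite subr_ge0 cos_le1.
have := @mono0 _ _ _ H1 H2 x x0.
by rewrite sin0 subr0 subr_ge0.
Qed.

Lemma cos_ge {R : realType} (x : R) : 0 <= x -> 1 - x ^+ 2 / 2 <= cos x.
Proof.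
move=> x0.
have H1 : forall y, is_derive y (1:R) (fun z => cos z + z * z / 2) (y - sin y).
  move=> y; apply: is_derive_eq.
  rewrite /= scaler0 add0r -scalerDl scalerA.
  have -> : forall a : R, a%:A = a by move=> a; exact: mulr1.
  have E : forall a b : R, - b + 2^-1 * (a + a) = a - b by move=> a b; field.
  exact: E.
have H2 : forall y : R, 0 <= y -> 0 <= y - sin y.
  by move=> y y0; rewrite subr_ge0 sin_le_id.
have := @mono0 _ _ _ H1 H2 x x0.
rewrite cos0 mul0r mul0r addr0.
have -> : cos x + x * x / 2 = cos x - (1 - x^+2/2) + 1.
  by rewrite expr2; field.
by rewrite lerDr subr_ge0.
Qed.

Lemma sin_ge {R : realType} (x : R) : 0 <= x -> x - x ^+ 3 / 6 <= sin x.
Proof.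
move=> x0.
have H1 : forall y, is_derive y (1:R) (fun z => sin z - z + z * z * z / 6)
     (cos y - (1 - y ^+ 2 / 2)).
  move=> y; apply: is_derive_eq.
  rewrite /= scaler0 add0r.
  have A : forall a : R, a%:A = a by move=> a; exact: mulr1.
  have S : forall a b : R, a *: b = a * b by [].
  rewrite !A !S.
  have E : forall a b c : R, c - 1 + 6^-1 * (a * a + a * (a + a)) = c - (1 - a ^+ 2 / 2).
    by move=> a b c; field.
  exact: E.
have H2 : forall y : R, 0 <= y -> 0 <= cos y - (1 - y ^+ 2 / 2).
  by move=> y y0; rewrite subr_ge0 cos_ge.
have := @mono0 _ _ _ H1 H2 x x0.
rewrite sin0 !mul0r subr0 addr0.
have -> : sin x - x + x * x * x / 6 = sin x - (x - x^+3/6).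
  by rewrite !exprS expr0; field.
by rewrite subr_ge0.
Qed.

Definition neuron (R : realType) := (seq (nat * R) * R)%type.
Definition lf {R : realType} (c : seq (nat * R)) (x : nat -> R) : R :=
  \sum_(p <- c) p.2 * x p.1.
Definition relu {R : realType} (r : R) : R := Num.max r 0.
Definition nth0 {R : realType} (L : seq (neuron R)) i := nth ([::], 0) L i.
Definition ev_layer {R : realType} (L : seq (neuron R)) (x : nat -> R) : nat -> R :=
  fun i => if (i < size L)%N then relu (lf (nth0 L i).1 x - (nth0 L i).2) else 0.
Definition ev_net {R : realType} (Ls : seq (seq (neuron R))) (out : seq (nat * R))
  (x : nat -> R) : R := lf out (foldl (fun y L => ev_layer L y) x Ls).
Definition v2f {R : realType} n (x : 'cV[R]_n) : nat -> R :=
  fun k => oapp (fun i : 'I_n => x i 0) 0 (insub k).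
Definition mkA {R : realType} n (L : seq (neuron R)) : 'M[R]_(size L, n) :=
  \matrix_(i, j) \sum_(p <- (nth0 L i).1 | p.1 == (j : nat)) p.2.
Definition mkb {R : realType} (L : seq (neuron R)) : 'cV[R]_(size L) :=
  \col_i (nth0 L i).2.
Definition mkout {R : realType} n (c : seq (nat * R)) : 'M[R]_(1, n) :=
  \row_j \sum_(p <- c | p.1 == (j : nat)) p.2.
Fixpoint to_net {R : realType} n (Ls : seq (seq (neuron R))) out : relu_net R n :=
  match Ls with
  | [::] => RNout (mkout n out)
  | L :: Ls' => RNlayer (mkA n L) (mkb L) (to_net (size L) Ls' out)
  end.

Lemma lf_mx {R : realType} n (c : seq (nat * R)) (x : 'cV[R]_n) :
  \sum_(j < n) (\sum_(p <- c | p.1 == (j : nat)) p.2) * x j 0 = lf c (v2f x).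
Proof.
elim: c => [|q c IH].
  by rewrite /lf big_nil; apply: big1 => j _; rewrite big_nil mul0r.
rewrite /lf big_cons -/(lf c _) -IH.
have -> : \sum_(j < n) (\sum_(p <- (q :: c) | p.1 == (j : nat)) p.2) * x j 0 =
  \sum_(j < n) ((if q.1 == (j : nat) then q.2 else 0) * x j 0 +
                (\sum_(p <- c | p.1 == (j : nat)) p.2) * x j 0).
  apply: eq_bigr => j _; rewrite big_cons; case: ifP => _; last by rewrite mul0r add0r.
  by rewrite mulrDl.
rewrite big_split /=; congr (_ + _).
rewrite /v2f; case: insubP => [i Hi Ei|Hn] /=.
  rewrite (bigD1 i) //= -Ei eqxx big1 ?addr0 // => j Hj.
  by rewrite (inj_eq val_inj) eq_sym (negbTE Hj) mul0r.
rewrite mulr0; apply: big1 => j _.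
have -> : (q.1 == (j : nat)) = false.
  by apply/negbTE; apply: contra Hn => /eqP ->.
by rewrite mul0r.
Qed.

Lemma to_net_eval {R : realType} n (Ls : seq (seq (neuron R))) out (x : 'cV[R]_n) :
  net_eval (to_net n Ls out) x = ev_net Ls out (v2f x).
Proof.
elim: Ls n x => [|L Ls IH] n x /=.
  by rewrite /ev_net /= mxE -lf_mx; apply: eq_bigr => j _; rewrite !mxE.
rewrite IH /ev_net /=; congr (lf _ (foldl _ _ _)).
apply: boolp.funext => k; rewrite /v2f /ev_layer.
case: insubP => [i Hi Ei|Hn] /=.
  by rewrite Hi /sigma_b !mxE -lf_mx -Ei /relu; congr (Num.max (_ - _) 0);
     apply: eq_bigr => j _; rewrite !mxE.
by rewrite (negbTE Hn).
Qed.

Lemma to_net_depth {R : realType} n (Ls : seq (seq (neuron R))) out :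
  net_depth (to_net n Ls out) = size Ls.
Proof. by elim: Ls n => [|L Ls IH] n //=; rewrite IH. Qed.

Lemma to_net_width {R : realType} n (Ls : seq (seq (neuron R))) out :
  net_width (to_net n Ls out) = foldr (fun L m => maxn (size L) m) 0%N Ls.
Proof. by elim: Ls n => [|L Ls IH] n //=; rewrite IH. Qed.

Inductive kind (R : realType) := KTent | KInit of R | KStep of R | KFin of R.
Arguments KTent {R}.

Definition gfun {R : realType} (v : R) : R := 2 * relu v - 4 * relu (v - 1/2).

Definition kstep {R : realType} (K : kind R) (p : R * R) : R * R :=
  let G := gfun p.1 in let C := relu p.2 in
  match K with
  | KTent => (G, 0)
  | KInit k => (k * G, k * G)
  | KStep w => (G, C + w * G)
  | KFin w => (C + w * G, 0)
  end.

Definition run {R : realType} (ks : seq (kind R)) (p : R * R) : R * R :=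
  foldl (fun q K => kstep K q) p ks.

Definition Gf {R : realType} (o : nat) : seq (nat * R) := [:: (o, 2); (o.+1, -4)].
Definition Cf {R : realType} (o : nat) : seq (nat * R) := [:: (o.+2, 1)].
Definition scl {R : realType} (w : R) (c : seq (nat * R)) := [seq (p.1, w * p.2) | p <- c].

Definition Vform {R : realType} (K : kind R) o : seq (nat * R) :=
  match K with
  | KTent => Gf o | KInit k => scl k (Gf o) | KStep _ => Gf o
  | KFin w => Cf o ++ scl w (Gf o) end.
Definition Aform {R : realType} (K : kind R) o : seq (nat * R) :=
  match K with
  | KTent => [::] | KInit k => scl k (Gf o) | KStep w => Cf o ++ scl w (Gf o)
  | KFin _ => [::] end.

Definition pneurons {R : realType} (V A : seq (nat * R)) : seq (neuron R) :=
  [:: (V, 0); (V, 1/2); (A, 0)].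
Definition layerK {R : realType} (K : kind R) : seq (neuron R) :=
  ([::], -1) :: pneurons (Vform K 1) (Aform K 1) ++ pneurons (Vform K 4) (Aform K 4).

Definition st {R : realType} (p1 p2 : R * R) : nat -> R :=
  fun i => match i with
  | 0%N => 1 | 1%N => relu p1.1 | 2%N => relu (p1.1 - 1/2) | 3%N => relu p1.2
  | 4%N => relu p2.1 | 5%N => relu (p2.1 - 1/2) | 6%N => relu p2.2 | _ => 0 end.

Lemma lf_cat {R : realType} (c d : seq (nat * R)) x : lf (c ++ d) x = lf c x + lf d x.
Proof. by rewrite /lf big_cat. Qed.
Lemma lf_scl {R : realType} w (c : seq (nat * R)) x : lf (scl w c) x = w * lf c x.
Proof. by rewrite /lf big_map big_distrr; apply: eq_bigr => p _ /=; rewrite mulrA. Qed.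
Lemma lf_nil {R : realType} (x : nat -> R) : lf [::] x = 0.
Proof. by rewrite /lf big_nil. Qed.

Lemma lfG1 {R : realType} (p1 p2 : R * R) : lf (Gf 1) (st p1 p2) = gfun p1.1.
Proof. by rewrite /lf !big_cons big_nil /= /gfun; ring. Qed.
Lemma lfG4 {R : realType} (p1 p2 : R * R) : lf (Gf 4) (st p1 p2) = gfun p2.1.
Proof. by rewrite /lf !big_cons big_nil /= /gfun; ring. Qed.
Lemma lfC1 {R : realType} (p1 p2 : R * R) : lf (Cf 1) (st p1 p2) = relu p1.2.
Proof. by rewrite /lf !big_cons big_nil /=; ring. Qed.
Lemma lfC4 {R : realType} (p1 p2 : R * R) : lf (Cf 4) (st p1 p2) = relu p2.2.
Proof. by rewrite /lf !big_cons big_nil /=; ring. Qed.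

Lemma lfV1 {R : realType} (K : kind R) p1 p2 : lf (Vform K 1) (st p1 p2) = (kstep K p1).1.
Proof. by case: K => *; rewrite /Vform ?lf_cat ?lf_scl ?lfG1 ?lfC1. Qed.
Lemma lfV4 {R : realType} (K : kind R) p1 p2 : lf (Vform K 4) (st p1 p2) = (kstep K p2).1.
Proof. by case: K => *; rewrite /Vform ?lf_cat ?lf_scl ?lfG4 ?lfC4. Qed.
Lemma lfA1 {R : realType} (K : kind R) p1 p2 : lf (Aform K 1) (st p1 p2) = (kstep K p1).2.
Proof. by case: K => *; rewrite /Aform ?lf_nil ?lf_cat ?lf_scl ?lfG1 ?lfC1. Qed.
Lemma lfA4 {R : realType} (K : kind R) p1 p2 : lf (Aform K 4) (st p1 p2) = (kstep K p2).2.
Proof. by case: K => *; rewrite /Aform ?lf_nil ?lf_cat ?lf_scl ?lfG4 ?lfC4. Qed.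

Lemma relu1 {R : realType} : relu (0 - -1 : R) = 1.
Proof. by rewrite /relu sub0r opprK; apply/max_idPl; rewrite ler01. Qed.

Lemma ev_layerK {R : realType} (K : kind R) p1 p2 :
  ev_layer (layerK K) (st p1 p2) = st (kstep K p1) (kstep K p2).
Proof.
apply: boolp.funext => i; rewrite /ev_layer /nth0.
by case: i => [|[|[|[|[|[|[|i]]]]]]]; rewrite /= ?lf_nil ?relu1 ?lfV1 ?lfV4 ?lfA1 ?lfA4 ?subr0.
Qed.

Lemma run_layers {R : realType} (ks : seq (kind R)) p1 p2 :
  foldl (fun y L => ev_layer L y) (st p1 p2) (map layerK ks) = st (run ks p1) (run ks p2).
Proof. by elim: ks p1 p2 => [|K ks IH] p1 p2 //=; rewrite ev_layerK IH. Qed.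

Definition firstL {R : realType} (a1 b1 c1 a2 b2 c2 : R) : seq (neuron R) :=
  [:: ([::], -1);
      ([:: (0%N, a1); (1%N, b1)], - c1); ([:: (0%N, a1); (1%N, b1)], 1/2 - c1); ([::], 0);
      ([:: (0%N, a2); (1%N, b2)], - c2); ([:: (0%N, a2); (1%N, b2)], 1/2 - c2); ([::], 0)].

Lemma v2f_pt2 {R : realType} (s t : R) : v2f (pt2 s t) 0 = s /\ v2f (pt2 s t) 1 = t.
Proof.
rewrite /v2f; split.
  by case: insubP => [i _ Ei|] //=; rewrite /pt2 mxE; have -> : i = ord0 by apply: val_inj.
by case: insubP => [i _ Ei|] //=; rewrite /pt2 mxE; have -> : i = ord_max by apply: val_inj.
Qed.

Lemma ev_first {R : realType} (a1 b1 c1 a2 b2 c2 s t : R) :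
  ev_layer (firstL a1 b1 c1 a2 b2 c2) (v2f (pt2 s t)) =
  st (a1 * s + b1 * t + c1, 0) (a2 * s + b2 * t + c2, 0).
Proof.
have [Hs Ht] := v2f_pt2 s t.
apply: boolp.funext => i; rewrite /ev_layer /nth0.
case: i => [|[|[|[|[|[|[|i]]]]]]]; rewrite /= ?relu1 /lf ?big_cons ?big_nil /= ?Hs ?Ht //.
all: try (congr relu; ring).
all: exact: relu1.
Qed.

Definition outL {R : realType} (gam : R) : seq (nat * R) :=
  [:: (0%N, 2 * gam); (1%N, - (2 * gam)); (4%N, - (2 * gam))].

Lemma lf_out {R : realType} (gam : R) p1 p2 :
  lf (outL gam) (st p1 p2) = 2 * gam * (1 - relu p1.1 - relu p2.1).
Proof. by rewrite /lf !big_cons big_nil /=; ring. Qed.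

Definition full_net {R : realType} (a1 b1 c1 a2 b2 c2 gam : R) (ks : seq (kind R)) :=
  to_net 2 (firstL a1 b1 c1 a2 b2 c2 :: map layerK ks) (outL gam).

Lemma full_net_eval {R : realType} (a1 b1 c1 a2 b2 c2 gam : R) ks s t :
  net_eval (full_net a1 b1 c1 a2 b2 c2 gam ks) (pt2 s t) =
  2 * gam * (1 - relu (run ks (a1 * s + b1 * t + c1, 0)).1
                - relu (run ks (a2 * s + b2 * t + c2, 0)).1).
Proof. by rewrite /full_net to_net_eval /ev_net /= ev_first run_layers lf_out. Qed.

Lemma full_net_depth {R : realType} (a1 b1 c1 a2 b2 c2 gam : R) ks :
  net_depth (full_net a1 b1 c1 a2 b2 c2 gam ks) = (size ks).+1.
Proof. by rewrite /full_net to_net_depth /= size_map. Qed.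

Lemma full_net_width {R : realType} (a1 b1 c1 a2 b2 c2 gam : R) ks :
  (net_width (full_net a1 b1 c1 a2 b2 c2 gam ks) <= 7)%N.
Proof.
rewrite /full_net to_net_width /=.
rewrite geq_max leqnn /=; elim: ks => [|K ks IH] //=.
by rewrite geq_max IH.
Qed.

Definition qf {R : realType} (x : R) : R := x - x ^+ 2.
Definition Sg {R : realType} (n : nat) (x : R) : R :=
  \sum_(i < n) iter i.+1 gfun x / 4 ^+ i.+1.

Lemma relu_id {R : realType} (x : R) : 0 <= x -> relu x = x.
Proof. by move=> h; rewrite /relu; apply/max_idPl. Qed.
Lemma relu_0 {R : realType} (x : R) : x <= 0 -> relu x = 0.
Proof. by move=> h; rewrite /relu; apply/max_idPr. Qed.
Lemma relu_ge0 {R : realType} (x : R) : 0 <= relu x.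
Proof. by rewrite /relu le_max lexx orbT. Qed.

Lemma gfun_lo {R : realType} (x : R) : 0 <= x -> x <= 1/2 -> gfun x = 2 * x.
Proof.
by move=> h0 h1; rewrite /gfun relu_id // relu_0 ?subr_le0 // mulr0 subr0.
Qed.
Lemma gfun_hi {R : realType} (x : R) : 1/2 <= x -> gfun x = 2 - 2 * x.
Proof.
move=> h; rewrite /gfun relu_id ?relu_id ?subr_ge0 //; last by apply: le_trans h; lra.
lra.
Qed.
Lemma gfun01 {R : realType} (x : R) : 0 <= x <= 1 -> 0 <= gfun x <= 1.
Proof.
case/andP=> h0 h1; case: (lerP x (1/2)) => h.
  by rewrite gfun_lo //; apply/andP; split; lra.
by rewrite gfun_hi; [apply/andP; split; lra| lra].
Qed.
Lemma iter_g01 {R : realType} k (x : R) : 0 <= x <= 1 -> 0 <= iter k gfun x <= 1.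
Proof. by move=> h; elim: k => [|k IH] //=; apply: gfun01. Qed.

Lemma qf_g {R : realType} (x : R) : 0 <= x <= 1 -> qf x = gfun x / 4 + qf (gfun x) / 4.
Proof.
case/andP=> h0 h1; rewrite /qf; case: (lerP x (1/2)) => h.
  by rewrite gfun_lo //; field.
by rewrite gfun_hi; [field| lra].
Qed.

Lemma qf_S {R : realType} k (x : R) : 0 <= x <= 1 ->
  qf x = Sg k x + qf (iter k gfun x) / 4 ^+ k.
Proof.
move=> hx; elim: k => [|k IH]; first by rewrite /Sg big_ord0 expr0 divr1 add0r.
rewrite IH /Sg big_ord_recr /= (qf_g (iter_g01 k hx)) exprS.
have h4 : (4:R) ^+ k != 0 by apply: expf_neq0; rewrite pnatr_eq0.
set a := iter k gfun x; set s := \sum_(i < k) _.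
by field.
Qed.

Lemma qf01 {R : realType} (x : R) : 0 <= x <= 1 -> 0 <= qf x <= 1/4.
Proof.
case/andP=> h0 h1; rewrite /qf expr2; have := sqr_ge0 (x - 1/2); rewrite expr2 => h.
by apply/andP; split; nra.
Qed.

Lemma Sg_ge0 {R : realType} n (x : R) : 0 <= x <= 1 -> 0 <= Sg n x.
Proof.
move=> hx; rewrite /Sg; apply: sumr_ge0 => i _.
have /andP[h0 _] := iter_g01 i.+1 hx.
by apply: divr_ge0 => //; apply: exprn_ge0.
Qed.

Definition blk {R : realType} (sg : R) (n : nat) : seq (kind R) :=
  [seq KStep (sg / 4 ^+ i.+1) | i <- iota 0 n.-1] ++ [:: KFin (sg / 4 ^+ n)].

Lemma run_cat {R : realType} (a b : seq (kind R)) p : run (a ++ b) p = run b (run a p).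
Proof. by rewrite /run foldl_cat. Qed.

Lemma run_steps {R : realType} (sg V A0 : R) k : 0 <= V <= 1 ->
  (forall i, (i < k)%N -> 0 <= A0 + sg * Sg i V) ->
  run [seq KStep (sg / 4 ^+ i.+1) | i <- iota 0 k] (V, A0) =
  (iter k gfun V, A0 + sg * Sg k V).
Proof.
move=> hV; elim: k => [|k IH] hA; first by rewrite /= /Sg big_ord0 mulr0 addr0.
have -> : iota 0 k.+1 = iota 0 k ++ [:: k] by rewrite -addn1 iotaD.
rewrite map_cat run_cat IH; last by move=> i hi; apply: hA; lia.
rewrite /= relu_id; last by apply: hA; lia.
rewrite /Sg big_ord_recr /=; congr (_, _); ring.
Qed.

Lemma run_blk {R : realType} (sg V A0 : R) n : (0 < n)%N -> 0 <= V <= 1 ->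
  (forall i, (i < n)%N -> 0 <= A0 + sg * Sg i V) ->
  run (blk sg n) (V, A0) = (A0 + sg * Sg n V, 0).
Proof.
case: n => [|n] // _ hV hA.
rewrite /blk run_cat run_steps //; last by move=> i hi; apply: hA; lia.
rewrite /= relu_id; last by apply: hA; lia.
rewrite /Sg big_ord_recr /=; congr (_, _); ring.
Qed.

Definition L4 {R : realType} (n : nat) (d : R) : R := 4 * Sg n d.

Lemma L4_01 {R : realType} n (d : R) : 0 <= d <= 1 -> 0 <= L4 n d <= 1.
Proof.
move=> hd; rewrite /L4; apply/andP; split.
  by apply: mulr_ge0 => //; apply: Sg_ge0.
have := qf_S n hd; have /andP[_ h1] := qf01 hd.
have /andP[h2 _] := qf01 (iter_g01 n hd).
have h4 : 0 < (4 : R) ^+ n by apply: exprn_gt0.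
have h5 : 0 <= qf (iter n gfun d) / 4 ^+ n by apply: divr_ge0 => //; apply: ltW.
lra.
Qed.

Lemma run_logi {R : realType} m n (d : R) : (0 < n)%N -> 0 <= d <= 1 ->
  run (flatten (nseq m (blk 4 n))) (d, 0) = (iter m (L4 n) d, 0).
Proof.
move=> hn; elim: m d => [|m IH] d hd //=.
rewrite run_cat run_blk //; last by move=> i _; rewrite add0r; apply: mulr_ge0 => //; apply: Sg_ge0.
rewrite add0r IH; first by congr (_, _); rewrite /L4; elim: (m) => [|k IHk] //=; rewrite IHk.
by have := L4_01 n hd; rewrite /L4.
Qed.

Lemma run_tents {R : realType} r (v : R) :
  run (nseq r KTent) (v, 0) = (iter r gfun v, 0).
Proof.
elim: r v => [|r IH] v //=; rewrite IH; congr (_, _).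
by elim: (r) => [|k IHk] //=; rewrite IHk.
Qed.

Definition ks_all {R : realType} (r m n : nat) (kap : R) : seq (kind R) :=
  nseq r KTent ++ KInit kap :: blk (-1) n ++ flatten (nseq m (blk 4 n)).

Lemma size_ks_all {R : realType} r m n (kap : R) : (0 < n)%N ->
  size (ks_all r m n kap) = (r + 1 + n + m * n)%N.
Proof.
move=> hn; rewrite /ks_all size_cat /= size_cat size_nseq.
have hb : forall sg : R, size (blk sg n) = n.
  by move=> sg; rewrite /blk size_cat size_map size_iota /=; lia.
rewrite hb; have -> : size (flatten (nseq m (blk (4:R) n))) = (m * n)%N.
  by elim: m => [|m IH] //=; rewrite size_cat IH hb mulSn.
lia.
Qed.

Lemma run_all {R : realType} r m n (kap v : R) : (0 < n)%N -> 0 <= v <= 1 ->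
  0 <= kap <= 1/2 ->
  let th := kap * iter r.+1 gfun v in
  (run (ks_all r m n kap) (v, 0)).1 = iter m (L4 n) (th - Sg n th) /\
  0 <= th <= 1/2 /\ th - Sg n th = th ^+ 2 + qf (iter n gfun th) / 4 ^+ n.
Proof.
move=> hn hv hk th.
have hy := iter_g01 r.+1 hv.
have hth : 0 <= th <= 1/2.
  by rewrite /th; case/andP: hk => ? ?; case/andP: hy => ? ?; apply/andP; split; nra.
have hth1 : 0 <= th <= 1 by case/andP: hth => ? ?; apply/andP; split; lra.
have Eq : forall i, th - Sg i th = th ^+ 2 + qf (iter i gfun th) / 4 ^+ i.
  by move=> i; have := qf_S i hth1; rewrite /qf; lra.
split; last by split.
rewrite /ks_all run_cat run_tents /= -iterS -/th.
rewrite run_cat run_blk //; last first.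
  move=> i _; rewrite mulN1r Eq; apply: addr_ge0; first exact: sqr_ge0.
  apply: divr_ge0; last by apply: exprn_ge0.
  by have /andP[] := qf01 (iter_g01 i hth1).
rewrite mulN1r run_logi //.
rewrite Eq; have /andP[q0 q1] := qf01 (iter_g01 n hth1).
have h4 : 1 <= (4 : R) ^+ n by apply: exprn_ege1; lra.
have h5 : qf (iter n gfun th) / 4 ^+ n <= 1/4.
  by rewrite ler_pdivrMr ?(lt_le_trans ltr01) //; nra.
have h6 : 0 <= qf (iter n gfun th) / 4 ^+ n by apply: divr_ge0 => //; lra.
case/andP: hth => ? ?; apply/andP; split; nra.
Qed.

Definition Psin {R : realType} (z : R) : R := sin z ^+ 2.

Lemma P01 {R : realType} (z : R) : 0 <= Psin z <= 1.
Proof.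
rewrite /Psin sqr_ge0 /=; have := cos2Dsin2 z; have := sqr_ge0 (cos z); lra.
Qed.

Lemma P2 {R : realType} (z : R) : Psin (z *+ 2) = 4 * qf (Psin z).
Proof.
rewrite /Psin /qf sin_mulr2n.
have h := cos2sin2 z.
transitivity (4 * cos z ^+ 2 * sin z ^+ 2); first by rewrite mulr2n; ring.
rewrite h; ring.
Qed.

Lemma Pg {R : realType} (x : R) : 0 <= x <= 1 ->
  Psin (pi * gfun x) = Psin ((pi * x) *+ 2).
Proof.
case/andP=> h0 h1; case: (lerP x (1/2)) => h.
  by rewrite gfun_lo // mulr2n; congr Psin; ring.
rewrite gfun_hi; last lra.
have -> : pi * (2 - 2 * x) = pi *+ 2 - (pi * x) *+ 2 by rewrite !mulr2n; ring.
by rewrite /Psin sinB sin2pi cos2pi mul0r mul1r sub0r sqrrN.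
Qed.

Lemma Piter {R : realType} k (x : R) : 0 <= x <= 1 ->
  Psin (pi * iter k gfun x) = Psin (pi * x * 2 ^+ k).
Proof.
move=> hx; elim: k => [|k IH]; first by rewrite expr0 mulr1.
rewrite iterS Pg; last exact: iter_g01.
rewrite P2 IH -P2 exprS; congr Psin; rewrite mulr2n; ring.
Qed.

Lemma Pper {R : realType} (z : R) N : Psin (z + pi *+ N) = Psin z.
Proof.
by rewrite /Psin (alternatingn (@sinDpi R)) exprMn sqrr_sign mul1r.
Qed.

Lemma Psmall {R : realType} (t : R) : 0 <= t <= 1 -> `|Psin t - t ^+ 2| <= t ^+ 4 / 3.
Proof.
case/andP=> h0 h1.
have a := sin_le_id h0; have b := sin_ge h0.
rewrite /Psin ler_norml; apply/andP; split.
  have c : 0 <= t - t ^+ 3 / 6 by rewrite !exprS expr0; nra.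
  have d : (t - t ^+ 3 / 6) ^+ 2 <= sin t ^+ 2 by rewrite !expr2; apply: ler_pM.
  have e : t ^+ 2 - t ^+ 4 / 3 <= (t - t ^+ 3 / 6) ^+ 2.
    have f : 0 <= t ^+ 6 / 36 by apply: divr_ge0 => //; apply: exprn_ge0.
    rewrite !exprS expr0 in f *; nra.
  lra.
have : sin t ^+ 2 <= t ^+ 2.
  have c : 0 <= t - t ^+ 3 / 6 by rewrite !exprS expr0; nra.
  by rewrite !expr2; apply: ler_pM => //; lra.
have : 0 <= t ^+ 4 / 3 by apply: divr_ge0 => //; apply: exprn_ge0.
lra.
Qed.

Lemma qlip {R : realType} (a b : R) : 0 <= a <= 1 -> 0 <= b <= 1 ->
  `|qf a - qf b| <= `|a - b|.
Proof.
move=> /andP[a0 a1] /andP[b0 b1].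
have -> : qf a - qf b = (a - b) * (1 - a - b) by rewrite /qf; ring.
rewrite normrM; apply: ler_piMr => //; rewrite ler_norml; apply/andP; split; lra.
Qed.

Lemma err_step {R : realType} n (D d : R) : 0 <= D <= 1 -> 0 <= d <= 1 ->
  `|4 * qf D - L4 n d| <= 4 * `|D - d| + 1 / 4 ^+ n.
Proof.
move=> hD hd.
have E := qf_S n hd.
have /andP[q0 q1] := qf01 (iter_g01 n hd).
have h4 : 0 < (4 : R) ^+ n by apply: exprn_gt0.
have -> : 4 * qf D - L4 n d = 4 * (qf D - qf d) + 4 * (qf (iter n gfun d) / 4 ^+ n).
  by rewrite /L4 E; ring.
apply: (le_trans (ler_normD _ _)); apply: lerD.
  by rewrite normrM ger0_norm ?ler_pM2l //; apply: qlip.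
rewrite normrM ger0_norm // ger0_norm; last by apply: divr_ge0 => //; apply: ltW.
rewrite mulrA ler_pM2r ?invr_gt0 //; lra.
Qed.

Lemma err_iter {R : realType} n i (D0 d0 : R) : 0 <= D0 <= 1 -> 0 <= d0 <= 1 ->
  `|iter i (fun D => 4 * qf D) D0 - iter i (L4 n) d0| + 1 / 4 ^+ n <=
  4 ^+ i * (`|D0 - d0| + 1 / 4 ^+ n).
Proof.
move=> hD hd; elim: i => [|i IH]; first by rewrite /= expr0; lra.
have hD' : 0 <= iter i (fun D => 4 * qf D) D0 <= 1.
  elim: (i) => [|k IHk] //=; have /andP[? ?] := qf01 IHk; apply/andP; split; lra.
have hd' : 0 <= iter i (L4 n) d0 <= 1 by elim: (i) => [|k IHk] //=; apply: L4_01.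
rewrite !iterS; have := err_step n hD' hd'.
rewrite exprS -mulrA.
have : 0 <= 1 / (4 : R) ^+ n by apply: divr_ge0 => //; apply: exprn_ge0.
lra.
Qed.

Lemma Piter4 {R : realType} i (t : R) :
  Psin (t * 2 ^+ i) = iter i (fun D => 4 * qf D) (Psin t).
Proof.
elim: i => [|i IH]; first by rewrite expr0 mulr1.
rewrite iterS -IH -P2 exprS; congr Psin; rewrite mulr2n; ring.
Qed.

Lemma pi_le4 {R : realType} : (pi : R) <= 4.
Proof. have := @pihalf_lt2 R; lra. Qed.

Lemma pipe_err {R : realType} r m (v : R) : (3 <= m)%N -> 0 <= v <= 1 ->
  0 <= (run (ks_all r m (2 * m) (pi / 2 ^+ m)) (v, 0)).1 <= 1 /\
  `|(run (ks_all r m (2 * m) (pi / 2 ^+ m)) (v, 0)).1 - Psin (pi * v * 2 ^+ r.+1)|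
    <= 88 / 4 ^+ m.
Proof.
move=> hm hv.
set X : R := 2 ^+ m.
have X8 : 8 <= X.
  rewrite /X; have -> : m = (3 + (m - 3))%N by lia.
  rewrite exprD; have : 1 <= (2:R) ^+ (m - 3) by apply: exprn_ege1; lra.
  have -> : (2:R) ^+ 3 = 8 by rewrite !exprS expr0; lra.
  nra.
have X0 : 0 < X by lra.
have E4m : (4:R) ^+ m = X ^+ 2 by rewrite /X -exprM mulnC exprM; congr (_ ^+ _); lra.
have E4n : (4:R) ^+ (2 * m) = X ^+ 4 by rewrite mulnC exprM E4m -exprM.
have hk : 0 <= pi / X <= 1/2.
  have := @pi_gt0 R; have := @pi_le4 R => ? ?.
  apply/andP; split; first by apply: divr_ge0; lra.
  by rewrite ler_pdivrMr //; lra.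
have hn : (0 < 2 * m)%N by lia.
have [E1 [hth E2]] := run_all r m hn hv hk.
rewrite -/X E1.
set y := iter r.+1 gfun v in E1 hth E2 *.
set th := pi / X * y in E1 hth E2 *.
have hy : 0 <= y <= 1 by apply: iter_g01.
have hth1 : 0 <= th <= 1 by case/andP: hth => ? ?; apply/andP; split; lra.
set q := qf (iter (2 * m) gfun th).
have /andP[q0 q1] : 0 <= q <= 1/4 := qf01 (iter_g01 (2 * m) hth1).
have h4n : 1 <= (4:R) ^+ (2 * m) by apply: exprn_ege1; lra.
have hqd : 0 <= q / 4 ^+ (2 * m) <= 1/4.
  apply/andP; split; first by apply: divr_ge0; lra.
  by rewrite ler_pdivrMr; lra.
have hd0 : 0 <= th - Sg (2 * m) th <= 1.
  rewrite E2 -/q; case/andP: hth => ? ?; case/andP: hqd => ? ?; apply/andP; split; nra.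
split.
  have gen : forall k, 0 <= iter k (L4 (2 * m)) (th - Sg (2 * m) th) <= 1.
    by elim=> [|k IHk]; [exact: hd0| rewrite iterS; exact: L4_01].
  exact: gen.
have EP : Psin (pi * v * 2 ^+ r.+1) = iter m (fun D => 4 * qf D) (Psin th).
  rewrite -Piter4 -(Piter r.+1 hv) -/y; congr Psin; rewrite /th /X; field.
  by apply: expf_neq0; rewrite pnatr_eq0.
rewrite EP distrC.
have := err_iter (2 * m) m (P01 th) hd0.
have e0 : `|Psin th - (th - Sg (2 * m) th)| <= th ^+ 4 / 3 + 1 / 4 ^+ (2 * m).
  rewrite E2 -/q.
  have : `|Psin th - th ^+ 2| <= th ^+ 4 / 3.
    by apply: Psmall; case/andP: hth => ? ?; apply/andP; split; lra.
  have -> : Psin th - (th ^+ 2 + q / 4 ^+ (2 * m)) =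
      (Psin th - th ^+ 2) - q / 4 ^+ (2 * m) by ring.
  move=> h; apply: (le_trans (ler_normB _ _)); apply: lerD => //.
  rewrite ger0_norm; last by case/andP: hqd.
  by rewrite ler_pM2r ?invr_gt0; lra.
rewrite E4n in e0; rewrite E4m E4n.
move=> h.
have thX : th * X <= 4.
  rewrite /th mulrAC divfK; last by lra.
  have := @pi_le4 R; have := @pi_gt0 R; case/andP: hy => ? ?; nra.
have th0 : 0 <= th by case/andP: hth.
set w := th * X in thX.
have Ew : th = w / X by rewrite /w mulfK //; lra.
have w0 : 0 <= w by rewrite /w; nra.
have w4 : w ^+ 4 <= 256.
  have w2 : w ^+ 2 <= 16 by rewrite expr2; nra.
  have -> : w ^+ 4 = (w ^+ 2) ^+ 2 by rewrite -exprM.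
  have : 0 <= w ^+ 2 by apply: sqr_ge0.
  rewrite [_ ^+ 2 ^+ 2]expr2; nra.
have key : X ^+ 2 * (th ^+ 4 / 3 + 1 / X ^+ 4 + 1 / X ^+ 4) = (w ^+ 4 / 3 + 2) / X ^+ 2.
  by rewrite Ew; field; lra.
have : X ^+ 2 * (`|Psin th - (th - Sg (2 * m) th)| + 1 / X ^+ 4) <=
       (w ^+ 4 / 3 + 2) / X ^+ 2.
  rewrite -key; apply: ler_pM; [exact: sqr_ge0| | exact: lexx|].
  - by apply: addr_ge0 => //; apply: divr_ge0 => //; apply: exprn_ge0; lra.
  - by lra.
have : (w ^+ 4 / 3 + 2) / X ^+ 2 <= 88 / X ^+ 2.
  rewrite ler_pM2r ?invr_gt0 ?exprn_gt0 //; lra.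
have : 0 <= 1 / X ^+ 4 by apply: divr_ge0 => //; apply: exprn_ge0; lra.
lra.
Qed.

Definition alph {R : realType} (j : nat) : R := if j == 1%N then 1 else Num.sqrt 2.
Definition phs {R : realType} (j : nat) : R := if (j != 1%N) && odd j then 1/4 else 0.

Lemma psi_cos {R : realType} j (s : R) :
  fourier_psi j s = alph j * cos (2 * pi * ((j./2)%:R * s - phs j)).
Proof.
rewrite /fourier_psi /alph /phs.
case: eqP => [->|hj] /=.
  by rewrite (_ : 2 * pi * _ = 0) ?cos0 ?mulr1 //; ring.
case: ifP => ho.
  by rewrite -cosBpihalf; congr (_ * cos _); field.
by rewrite subr0 mulrA.
Qed.

Lemma cos2P {R : realType} (z : R) : cos (z *+ 2) = 1 - 2 * Psin z.
Proof. by rewrite cos_mulr2n cos2sin2 /Psin mulr2n; ring. Qed.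

Lemma prod_formula {R : realType} j k (s t : R) :
  let a : R := (j./2)%:R in let b : R := (k./2)%:R in
  fourier_psi j s * fourier_psi k t =
  (alph j * alph k / 2) *
  (2 - 2 * Psin (pi * (a * s + b * t - phs j - phs k))
      - 2 * Psin (pi * (a * s - b * t - phs j + phs k))).
Proof.
move=> a b; rewrite !psi_cos -/a -/b.
set X := 2 * pi * (a * s - phs j).
set Y := 2 * pi * (b * t - phs k).
have h1 : X + Y = (pi * (a * s + b * t - phs j - phs k)) *+ 2.
  by rewrite mulr2n /X /Y; ring.
have h2 : X - Y = (pi * (a * s - b * t - phs j + phs k)) *+ 2.
  by rewrite mulr2n /X /Y; ring.
have e : cos X * cos Y = (cos (X + Y) + cos (X - Y)) / 2.
  by rewrite cosD cosB; field.
by rewrite mulrACA e h1 h2 !cos2P; field.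
Qed.

Lemma alph_bd {R : realType} j k : 0 <= (alph j : R) * alph k / 2 <= 1.
Proof.
have s0 : 0 <= Num.sqrt (2 : R) by apply: sqrtr_ge0.
have s2 : Num.sqrt (2 : R) ^+ 2 = 2 by rewrite sqr_sqrtr //; lra.
have s22 : Num.sqrt (2 : R) <= 2 by rewrite expr2 in s2; nra.
rewrite expr2 in s2.
by rewrite /alph; case: ifP => _; case: ifP => _; apply/andP; split; nra.
Qed.

Lemma depth_arith {R : realType} (A B Ah Bh : R) : 0 <= A -> 0 <= B -> A <= Ah -> B <= Bh ->
  1 <= Ah -> 1 <= Bh -> A + 3 + 2 * (B + 6) + 2 * (B + 6) ^+ 2 <= 116 * Ah * Bh ^+ 2.
Proof.
move=> A0 B0 AA BB A1 B1.
have h1 : B + 6 <= 7 * Bh by lra.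
have h2 : (B + 6) ^+ 2 <= 49 * Bh ^+ 2.
  rewrite !expr2; have : 0 <= B + 6 by lra.
  nra.
have h0 : 1 <= Bh ^+ 2 by rewrite expr2; nra.
have h3 : Bh <= Ah * Bh ^+ 2 by rewrite expr2; nra.
have h4 : Bh ^+ 2 <= Ah * Bh ^+ 2 by rewrite ler_peMl //; apply: sqr_ge0.
have h5 : 1 <= Ah * Bh ^+ 2 by lra.
have h6 : A <= Ah * Bh ^+ 2 by apply: le_trans AA _; rewrite ler_peMr //; lra.
lra.
Qed.

Lemma width_arith {R : realType} (Ah Bh l : R) : 1 <= Ah -> 1 <= Bh -> 0 < l ->
  7 <= 116 * Ah * Bh ^+ 3 * l + 7 * Ah * Bh ^+ 3.
Proof.
move=> A1 B1 l0.
have h0 : 1 <= Bh ^+ 3 by apply: exprn_ege1.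
have h1 : 1 <= Ah * Bh ^+ 3 by nra.
have h2 : 0 <= Ah * Bh ^+ 3 * l by apply: mulr_ge0; lra.
lra.
Qed.

Lemma depth_arith2 {R : realType} (Ah Bh l : R) : 1 <= Ah -> 1 <= Bh -> 0 < l ->
  0 <= 7 * Ah * Bh ^+ 2 / l.
Proof.
move=> A1 B1 l0; apply: divr_ge0; last lra.
apply: mulr_ge0; first lra.
by apply: exprn_ge0; lra.
Qed.

Lemma close_arith {R : realType} (eps g P1 P2 d1 d2 K : R) : 0 <= g <= 1 ->
  `|d1 - P1| <= 88 / K -> `|d2 - P2| <= 88 / K -> 352 <= eps * K -> 0 < K ->
  `|g * (2 - 2 * P1 - 2 * P2) - 2 * g * (1 - d1 - d2)| <= eps.
Proof.
move=> /andP[g0 g1] h1 h2 hK K0.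
have -> : g * (2 - 2 * P1 - 2 * P2) - 2 * g * (1 - d1 - d2) =
          (2 * g) * ((d1 - P1) + (d2 - P2)) by ring.
rewrite normrM ger0_norm; last lra.
have h3 := ler_normD (d1 - P1) (d2 - P2).
have h4 : `|d1 - P1 + (d2 - P2)| <= 176 / K.
  apply: (le_trans h3).
  have -> : 176 / K = 88 / K + 88 / K by rewrite -mulrDl; congr (_ * _); lra.
  lra.
have h5 : 176 / K * (2 * g) <= 352 / K.
  rewrite mulrC mulrA ler_pM2r ?invr_gt0 //; lra.
have h6 : 352 / K <= eps by rewrite ler_pdivrMr // mulrC.
have h7 : 0 <= `|d1 - P1 + (d2 - P2)| by [].
have h8 : 2 * g * `|d1 - P1 + (d2 - P2)| <= 2 * g * (176 / K).
  by apply: ler_wpM2l => //; lra.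
lra.
Qed.

Lemma pow4_bound {R : realType} (eps : R) : 0 < eps -> eps < 1/2 ->
  352 <= eps * 4 ^+ (trunc_log 2 (Num.truncn (1 / eps)) + 6).
Proof.
move=> e0 e1.
set N := Num.truncn (1 / eps); set t := trunc_log 2 N.
have h1 : 1 / eps < N.+1%:R by apply: truncnS_gt.
have h2 : (N < 2 ^ t.+1)%N by apply: trunc_log_ltn.
set Z : R := 2 ^+ t.+1.
have hZ : N.+1%:R <= Z by rewrite /Z -natrX ler_nat.
have eZ : 1 < eps * Z.
  have : 1 / eps < Z by lra.
  by rewrite ltr_pdivrMr // mulrC.
have Z1 : 1 <= Z by rewrite /Z; apply: exprn_ege1; lra.
have E : (4:R) ^+ (t + 6) = Z ^+ 2 * 1024.
  rewrite -addSnnS exprD /Z -exprM mulnC exprM.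
  have -> : (2:R) ^+ 2 = 4 by rewrite expr2; lra.
  by congr (_ * _); rewrite !exprS expr0; lra.
rewrite E expr2.
nra.
Qed.

Lemma ln_le {R : realType} (x y : R) : 0 < x -> x <= y -> ln x <= ln y.
Proof. by move=> x0 xy; rewrite ler_ln // posrE (lt_le_trans x0 xy). Qed.

Lemma tl_ln {R : realType} (N : nat) : (0 < N)%N ->
  (trunc_log 2 N)%:R * ln (2 : R) <= ln (N%:R : R).
Proof.
move=> hN; have h := @trunc_logP 2 N isT hN.
rewrite mulr_natl -lnXn; last by lra.
apply: ln_le; first by apply: exprn_gt0; lra.
by rewrite -natrX ler_nat.
Qed.

Lemma half_le (j : nat) : (j./2 + j./2 <= j)%N.
Proof. by have := odd_double_half j; rewrite -addnn; lia. Qed.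

Unset Implicit Arguments.

Theorem lemmaE2 (R : realType) :
  exists c : R, 0 < c /\
  forall (j k : nat) (eps : R), (1 <= j)%N -> (1 <= k)%N ->
    0 < eps -> eps < 1 / 2 ->
    exists N : relu_net R 2,
      (net_depth N)%:R <= c * Lambda R j k * ln (1 / eps) ^+ 2 /\
      (net_width N)%:R <= c * Lambda R j k * ln (1 / eps) ^+ 3 /\
      (forall s t : R, 0 <= s <= 1 -> 0 <= t <= 1 ->
         `| fourier_psi j s * fourier_psi k t - net_eval N (pt2 s t) | <= eps).
Proof.
set l := ln (2 : R).
have hl : 0 < l by apply: ln_gt0; lra.
exists (116 / l ^+ 3 + 7 / l ^+ 4); split.
  by apply: addr_gt0; apply: divr_gt0 => //; apply: exprn_gt0.
move=> j k eps hj hk he0 he1.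
set M := maxn j k.
have hM : (1 <= M)%N by rewrite /M leq_max hj.
set r := (trunc_log 2 M).+1.
set NN := Num.truncn (1 / eps).
have hNN : (2 <= NN)%N.
  rewrite /NN truncn_ge_nat; last by apply: divr_ge0; lra.
  by rewrite ler_pdivlMr //; lra.
set m := (trunc_log 2 NN + 6)%N.
have hm3 : (3 <= m)%N by rewrite /m; lia.
set a : R := (j./2)%:R.
set b : R := (k./2)%:R.
set N0 : R := ((k./2).+1)%:R.
set D : R := 2 ^+ r.+1.
have D0 : 0 < D by apply: exprn_gt0; lra.
set gam : R := alph j * alph k / 2.
pose ks := ks_all r m (2 * m) (pi / 2 ^+ m : R).
exists (full_net (a / D) (b / D) ((N0 - phs j - phs k) / D)
                 (a / D) (- b / D) ((N0 - phs j + phs k) / D) gam ks).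
set Lam := Lambda R j k.
set L := ln (1 / eps).
have Lam_l : l <= Lam.
  rewrite /Lam /Lambda; apply: ln_le; first lra.
  by rewrite natrM ler_peMr ?ler1n //; lra.
have L_l : l <= L.
  by rewrite /L; apply: ln_le; [lra| rewrite ler_pdivlMr //; lra].
set A : R := (trunc_log 2 M)%:R.
set B : R := (trunc_log 2 NN)%:R.
have hA : A * l <= Lam.
  have h := @tl_ln R M hM; rewrite -/A -/l in h.
  apply: (le_trans h); rewrite /Lam /Lambda; apply: ln_le.
    by rewrite ltr0n.
  by rewrite ler_nat; lia.
have hB : B * l <= L.
  have h := @tl_ln R NN (ltn_trans (ltn0Sn 0) hNN); rewrite -/B -/l in h.
  apply: (le_trans h); rewrite /L; apply: ln_le.
    by rewrite ltr0n; lia.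
  by rewrite /NN truncn_le; apply: divr_ge0; lra.
have A0 : 0 <= A by rewrite /A ler0n.
have B0 : 0 <= B by rewrite /B ler0n.
set Ah := Lam / l.
set Bh := L / l.
have Ah1 : 1 <= Ah by rewrite /Ah ler_pdivlMr // mul1r.
have Bh1 : 1 <= Bh by rewrite /Bh ler_pdivlMr // mul1r.
have AAh : A <= Ah by rewrite /Ah ler_pdivlMr.
have BBh : B <= Bh by rewrite /Bh ler_pdivlMr.
have EL : Lam = Ah * l by rewrite /Ah divfK //; lra.
have EL' : L = Bh * l by rewrite /Bh divfK //; lra.
have Ec2 : (116 / l ^+ 3 + 7 / l ^+ 4) * Lam * L ^+ 2 =
    116 * Ah * Bh ^+ 2 + 7 * Ah * Bh ^+ 2 / l.
  by rewrite EL EL'; field; exact: lt0r_neq0.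
have Ec3 : (116 / l ^+ 3 + 7 / l ^+ 4) * Lam * L ^+ 3 =
    116 * Ah * Bh ^+ 3 * l + 7 * Ah * Bh ^+ 3.
  by rewrite EL EL'; field; exact: lt0r_neq0.
split.
  rewrite full_net_depth size_ks_all; last by rewrite muln_gt0 /m addnS.
  rewrite Ec2.
  have -> : (((r + 1 + 2 * m + m * (2 * m))%N).+1%:R : R) =
      A + 3 + 2 * (B + 6) + 2 * (B + 6) ^+ 2.
    rewrite /r /m /A /B; set x := trunc_log 2 M; set y := trunc_log 2 NN.
    rewrite -natr1 !natrD !natrM !natrD; rewrite /=; ring.
  have := depth_arith A0 B0 AAh BBh Ah1 Bh1.
  have := depth_arith2 Ah1 Bh1 hl.
  move: (A + 3 + 2 * (B + 6) + 2 * (B + 6) ^+ 2) (116 * Ah * Bh ^+ 2)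
        (7 * Ah * Bh ^+ 2 / l) => u v w; clear; lra.
split.
  rewrite Ec3.
  have hw := full_net_width (a / D) (b / D) ((N0 - phs j - phs k) / D)
                 (a / D) (- b / D) ((N0 - phs j + phs k) / D) gam ks.
  apply: (le_trans (_ : _ <= 7%:R)); first by rewrite ler_nat.
  exact: width_arith.
move=> s t hs ht.
rewrite full_net_eval prod_formula -/a -/b -/gam.
set u1 := a * s + b * t - phs j - phs k.
set u2 := a * s - b * t - phs j + phs k.
set v1 := a / D * s + b / D * t + (N0 - phs j - phs k) / D.
set v2 := a / D * s + - b / D * t + (N0 - phs j + phs k) / D.
have ph : forall i, 0 <= (phs i : R) <= 1/4.
  by move=> i; rewrite /phs; case: ifP => _; apply/andP; split; lra.
have a0 : 0 <= a by rewrite /a ler0n.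
have b0 : 0 <= b by rewrite /b ler0n.
have EN0 : N0 = b + 1 by rewrite /N0 /b -natr1.
have hD : a + b + b + 2 <= D.
  have h1 : (j./2 + k./2 + k./2 + 2 <= 2 ^ r.+1)%N.
    have hh := @trunc_log_ltn 2 M isT.
    rewrite /r expnS; have := half_le j; have := half_le k.
    have : (j <= M)%N by rewrite /M leq_maxl.
    have : (k <= M)%N by rewrite /M leq_maxr.
    move: hh; move: (2 ^ (trunc_log 2 M).+1)%N => z; clear; lia.
  have ED : D = (2 ^ r.+1)%:R by rewrite /D natrX.
  rewrite ED (_ : a + b + b + 2 = (j./2 + k./2 + k./2 + 2)%:R); last by rewrite !natrD.
  by rewrite ler_nat.
have hv : forall u : R, 0 <= u + N0 <= D -> 0 <= (u + N0) / D <= 1.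
  move=> u /andP[u0 u1']; apply/andP; split; first by apply: divr_ge0; lra.
  by rewrite ler_pdivrMr // mul1r.
have Ev1 : v1 = (u1 + N0) / D by rewrite /v1 /u1; field; exact: lt0r_neq0.
have Ev2 : v2 = (u2 + N0) / D by rewrite /v2 /u2; field; exact: lt0r_neq0.
have st0 : 0 <= s <= 1 := hs.
have tt0 : 0 <= t <= 1 := ht.
have hv1 : 0 <= v1 <= 1.
  rewrite Ev1; apply: hv; move: (ph j) (ph k) st0 tt0 a0 b0 hD; rewrite /u1 EN0.
  clear; move=> /andP[? ?] /andP[? ?] /andP[? ?] /andP[? ?] ? ? ?.
  apply/andP; split; nra.
have hv2 : 0 <= v2 <= 1.
  rewrite Ev2; apply: hv; move: (ph j) (ph k) st0 tt0 a0 b0 hD; rewrite /u2 EN0.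
  clear; move=> /andP[? ?] /andP[? ?] /andP[? ?] /andP[? ?] ? ? ?.
  apply/andP; split; nra.
have [d1r e1] := pipe_err r hm3 hv1.
have [d2r e2] := pipe_err r hm3 hv2.
have EP : forall u : R, Psin (pi * ((u + N0) / D) * 2 ^+ r.+1) = Psin (pi * u).
  move=> u; rewrite -/D -(Pper (pi * u) (k./2).+1); congr Psin.
  rewrite -mulr_natr /N0; field; exact: lt0r_neq0.
rewrite Ev1 EP in e1; rewrite Ev2 EP in e2.
rewrite -/ks Ev1 Ev2 in d1r d2r *.
case/andP: d1r => d10 _; case/andP: d2r => d20 _.
rewrite (relu_id d10) (relu_id d20).
apply: close_arith e1 e2 _ _.
- exact: alph_bd.
- exact: pow4_bound.
- by apply: exprn_gt0; lra.
Qed.
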